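(* For $k\ge4$ let $$E_k(n)=\frac{\gamma_k}{(1-\tau_k)^2}\,\rho_k^{-n}\,n^{-3/2},\qquad\text{where }\ \gamma_k=\sqrt{\frac{\rho_k}{2\pi\Lambda_k''(\tau_k)}}.$$ By Theorem 4.1, $E_k(n)$ is the asymptotic equivalent of $P^{(k)}_n$ as $n\to\infty$ for each fixed $k$. There exist a constant $C>0$ and an integer $K$ such that for all $k\ge K$ and all $n\ge1$, $$E_k(n)\le\frac{1}{(1-\frac{e}{k})^2}\sqrt{\frac{e}{4\pi k}}\left(\frac{k}{e}\right)^n\left(1+\frac52\frac{\log k}{k}+\frac{C}{k}\right)^n n^{-3/2}.$$
   Context: Let $s_j$ be the number of simple permutations of size $j$. A permutation is simple if its only intervals (factors whose value set is a set of consecutive integers) are the singletons and the whole permutation, with the convention that the permutations of sizes $1$ and $2$ are not simple. For $k\ge4$, let $$\Lambda_k(x)=\frac{x^2}{1-x}+\sum_{j=4}^k s_j\left(\frac{x}{1-x}\right)^j\qquad(0\le x<1).$$ Let $\tau_k$ be the unique solution in $(0,1)$ of $\Lambda_k'(x)=1$, and set $\rho_k=\tau_k-\Lambda_k(\tau_k)$. Let $U^{(k)}(z)$ be the formal power series with $U^{(k)}(0)=0$ and $U^{(k)}=z+\Lambda_k(U^{(k)})$, and let $P^{(k)}_n=[z^n]\dfrac{U^{(k)}(z)}{1-U^{(k)}(z)}$. Combinatorially, $P^{(k)}_n$ is the number of permutations of size $n$ whose strong interval tree has no prime node of arity larger than $k$. *)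

(* Defs.v *)
From mathcomp Require Import all_boot all_fingroup.
Set Implicit Arguments. Unset Strict Implicit. Unset Printing Implicit Defensive.

Definition is_interval (j : nat) (p : 'S_j) (a l : nat) : bool :=
  [&& 0 < l, a + l <= j &
      [exists m : 'I_j.+1,
         [set p i | i : 'I_j & (a <= i) && (i < a + l)] ==
         [set x : 'I_j | (m <= x) && (x < m + l)]]].

(* simple: only intervals are singletons and the whole permutation;
   by convention permutations of size 1 and 2 (and 0) are not simple. *)
Definition simple_perm (j : nat) (p : 'S_j) : bool :=
  (2 < j) &&
  [forall a : 'I_j.+1, forall l : 'I_j.+1,
     is_interval p a l ==> ((l == 1 :> nat) || (l == j :> nat))].

Definition s_simple (j : nat) : nat := #|[set p : 'S_j | simple_perm p]|.

From Stdlib Require Import Reals.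
Open Scope R_scope.

Definition Lambda (k : nat) (x : R) : R :=
  x ^ 2 / (1 - x) +
  sum_f_R0 (fun i => INR (s_simple (i + 4)) * (x / (1 - x)) ^ (i + 4))
           (k - 4).

(* Main.v *)
Require Import Defs.
From Stdlib Require Import Reals Lra Lia Psatz Factorial.
From mathcomp Require all_boot all_fingroup.
From Coquelicot Require Coquelicot.
Open Scope R_scope.

Module Comb.
Import all_boot all_fingroup.
Lemma s_le_fact j : (s_simple j <= Factorial.fact j)%coq_nat.
Proof.
have -> : Factorial.fact j = j`!.
  by elim: j => [//|j IH]; rewrite factS -IH.
apply/leP; rewrite /s_simple -card_Sn; apply: max_card. Qed.
End Comb.
Lemma s_le_factR j : INR (s_simple j) <= INR (fact j).
Proof. apply le_INR. apply Comb.s_le_fact. Qed.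

Module Der.
Import Coquelicot.Coquelicot.
Lemma dterm (c : R) (j:nat) x : x < 1 -> derivable_pt_lim (fun x => c * (x/(1-x))^(j+4)) x
   (c * (INR (j+4) * (x/(1-x))^(j+3) / (1-x)^2)).
Proof. intros H. apply is_derive_Reals. auto_derive. lra.
replace (Init.Nat.pred (j+4)) with (j+3)%nat by lia. 
replace (x * / (1 + - x)) with (x/(1-x)) by (unfold Rdiv; f_equal; f_equal;ring).
field. lra. Qed.
Lemma dA x : x < 1 -> derivable_pt_lim (fun x => x^2/(1-x)) x ((2*x - x^2)/(1-x)^2).
Proof. intros H. apply is_derive_Reals. auto_derive. lra. field. lra. Qed.
End Der.

Lemma sum_deriv (f : nat -> R -> R) (f' : nat -> R -> R) x N :
  (forall i, derivable_pt_lim (f i) x (f' i x)) ->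
  derivable_pt_lim (fun x => sum_f_R0 (fun i => f i x) N) x (sum_f_R0 (fun i => f' i x) N).
Proof.
  intros H. induction N as [|N IH]; simpl.
  - apply H.
  - apply (derivable_pt_lim_plus (fun x => sum_f_R0 (fun i => f i x) N) (f (S N))); auto.
Qed.

Definition Dl (k : nat) (x : R) : R :=
  (2*x - x^2)/(1-x)^2 +
  sum_f_R0 (fun i => INR (s_simple (i + 4)) * (INR (i+4) * (x/(1-x))^(i+3) / (1-x)^2)) (k - 4).

Lemma Lambda_deriv k x : x < 1 -> derivable_pt_lim (Lambda k) x (Dl k x).
Proof.
  intros H. unfold Lambda, Dl.
  apply (derivable_pt_lim_plus (fun x => x^2/(1-x))
     (fun x => sum_f_R0 (fun i => INR (s_simple (i + 4)) * (x / (1 - x)) ^ (i + 4)) (k - 4))).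
  - apply Der.dA; auto.
  - apply (sum_deriv (fun i x => INR (s_simple (i + 4)) * (x / (1 - x)) ^ (i + 4))
       (fun i x => INR (s_simple (i + 4)) * (INR (i+4) * (x/(1-x))^(i+3) / (1-x)^2))).
    intros i. apply Der.dterm; auto.
Qed.
Lemma s_nonneg j : 0 <= INR (s_simple j). Proof. apply pos_INR. Qed.

Lemma sum_nonneg (f : nat -> R) N : (forall i, 0 <= f i) -> 0 <= sum_f_R0 f N.
Proof. intros H; induction N; simpl; auto. specialize (H (S N)). lra. Qed.

Lemma sum_le (f g : nat -> R) N : (forall i, f i <= g i) -> sum_f_R0 f N <= sum_f_R0 g N.
Proof. intros H; induction N; simpl; auto. specialize (H (S N)). lra. Qed.

Lemma sum_plus (f g : nat -> R) N : sum_f_R0 (fun i => f i + g i) N = sum_f_R0 f N + sum_f_R0 g N.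
Proof. induction N; simpl; lra. Qed.

Lemma sum_scal (f : nat -> R) c N : sum_f_R0 (fun i => c * f i) N = c * sum_f_R0 f N.
Proof. induction N; simpl; lra. Qed.

Lemma bern (j:nat) Y T : 0 <= Y -> 0 <= T -> T^(S j) + INR (S j) * T^j * (Y - T) <= Y^(S j).
Proof.
  intros HY HT. induction j.
  - simpl. lra.
  - rewrite S_INR. 
    assert (Hp : 0 <= T^j) by (apply pow_le; auto).
    replace (Y ^ S (S j)) with (Y * Y^(S j)) by (simpl; ring).
    apply Rle_trans with (Y * (T ^ S j + INR (S j) * T ^ j * (Y - T))).
    2: { apply Rmult_le_compat_l; auto. }
    assert (E1 : T ^ S (S j) = T*T*T^j) by (simpl; ring).
    assert (E2 : T ^ S j = T*T^j) by (simpl; ring).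
    rewrite E1, E2.
    assert (0 <= INR (S j)) by apply pos_INR.
    assert (0 <= INR (S j) * T^j * (Y-T)^2).
    { apply Rmult_le_pos; [apply Rmult_le_pos; lra| apply pow2_ge_0]. }
    nra.
Qed.

Lemma Lambda_eq k x : Lambda k x = x^2/(1-x) +
  sum_f_R0 (fun i => INR (s_simple (i + 4)) * (x / (1 - x)) ^ (i + 4)) (k - 4).
Proof. reflexivity. Qed.

Lemma y_nonneg x : 0 <= x < 1 -> 0 <= x/(1-x).
Proof. intros H. apply Rmult_le_pos; [lra|]. apply Rlt_le, Rinv_0_lt_compat; lra. Qed.

Lemma y_tangent x t : 0 <= x < 1 -> 0 <= t < 1 -> t/(1-t) + (x-t)/(1-t)^2 <= x/(1-x).
Proof.
  intros Hx Ht.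
  assert (E : x/(1-x) - (t/(1-t) + (x-t)/(1-t)^2) = (x-t)^2/((1-x)*(1-t)^2)) by (field; lra).
  assert (0 <= (x-t)^2/((1-x)*(1-t)^2)).
  { apply Rmult_le_pos; [apply pow2_ge_0|]. apply Rlt_le, Rinv_0_lt_compat.
    apply Rmult_lt_0_compat; [lra| apply pow_lt; lra]. }
  lra.
Qed.

Lemma P1 k x t : 0 <= x < 1 -> 0 <= t < 1 ->
  Lambda k t + Dl k t * (x - t) <= Lambda k x.
Proof.
  intros Hx Ht. rewrite !Lambda_eq; unfold Dl.
  assert (HA : t^2/(1-t) + (2*t - t^2)/(1-t)^2 * (x-t) <= x^2/(1-x)).
  { pose proof (y_tangent x t Hx Ht).
    assert (E1 : x^2/(1-x) = x/(1-x) - x) by (field; lra).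
    assert (E2 : t^2/(1-t) = t/(1-t) - t) by (field; lra).
    assert (E3 : (2*t - t^2)/(1-t)^2 * (x-t) = (x-t)/(1-t)^2 - (x - t)) by (field; lra).
    lra. }
  set (N := (k-4)%nat).
  assert (HS : sum_f_R0 (fun i => INR (s_simple (i + 4)) * (t / (1 - t)) ^ (i + 4)) N
     + sum_f_R0 (fun i => INR (s_simple (i + 4)) * (INR (i+4) * (t/(1-t))^(i+3) / (1-t)^2)) N * (x - t)
     <= sum_f_R0 (fun i => INR (s_simple (i + 4)) * (x / (1 - x)) ^ (i + 4)) N).
  { rewrite Rmult_comm, <- sum_scal, <- sum_plus. apply sum_le. intros i.
    pose proof (s_nonneg (i+4)) as Hs.
    pose proof (y_nonneg x Hx) as HY. pose proof (y_nonneg t Ht) as HT.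
    pose proof (y_tangent x t Hx Ht) as Htg.
    replace (i+4)%nat with (S (i+3)) by lia.
    pose proof (bern (i+3) (x/(1-x)) (t/(1-t)) HY HT) as Hb.
    assert (0 <= INR (S (i+3)) * (t/(1-t))^(i+3)).
    { apply Rmult_le_pos; [apply pos_INR| apply pow_le; auto]. }
    assert (INR (S (i + 3)) * (t / (1 - t)) ^ (i + 3) * ((x-t)/(1-t)^2) <=
            INR (S (i + 3)) * (t / (1 - t)) ^ (i + 3) * (x / (1 - x) - t / (1 - t))).
    { apply Rmult_le_compat_l; auto; lra. }
    assert (E : (x - t) * (INR (s_simple (S (i + 3))) *
       (INR (S (i + 3)) * (t / (1 - t)) ^ (i + 3) / (1 - t) ^ 2)) =
       INR (s_simple (S (i + 3))) * (INR (S (i + 3)) * (t / (1 - t)) ^ (i + 3) * ((x-t)/(1-t)^2)))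
      by (field; lra).
    rewrite E, <- Rmult_plus_distr_l. apply Rmult_le_compat_l; [apply s_nonneg| lra]. }
  lra.
Qed.

Lemma P2 k t : 0 <= t < 1 -> 2 * Lambda k t <= t * Dl k t.
Proof.
  intros Ht. rewrite !Lambda_eq; unfold Dl.
  assert (HA : 2 * (t^2/(1-t)) <= t * ((2*t - t^2)/(1-t)^2)).
  { assert (E : t * ((2*t - t^2)/(1-t)^2) - 2 * (t^2/(1-t)) = t^3/(1-t)^2) by (field; lra).
    assert (0 <= t^3/(1-t)^2).
    { apply Rmult_le_pos; [apply pow_le; lra|]. apply Rlt_le, Rinv_0_lt_compat, pow_lt; lra. }
    lra. }
  rewrite Rmult_plus_distr_l, Rmult_plus_distr_l.
  apply Rplus_le_compat; auto.
  rewrite <- !sum_scal. apply sum_le. intros i.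
  pose proof (s_nonneg (i+4)) as Hs. pose proof (y_nonneg t Ht) as HT.
  assert (Hp : 0 <= (t/(1-t))^(i+4)) by (apply pow_le; auto).
  assert (E : t * (INR (s_simple (i + 4)) * (INR (i + 4) * (t / (1 - t)) ^ (i + 3) / (1 - t) ^ 2))
     = INR (s_simple (i + 4)) * (t/(1-t))^(i+4) * (INR (i+4) / (1-t))).
  { replace (i+4)%nat with (S (i+3)) by lia. simpl pow. field. lra. }
  rewrite E.
  assert (2 <= INR (i+4) / (1-t)).
  { rewrite plus_INR. assert (0 <= INR i) by apply pos_INR. simpl (INR 4).
    apply Rmult_le_reg_r with (1-t); [lra|]. unfold Rdiv. rewrite Rmult_assoc, Rinv_l; lra. }
  assert (0 <= INR (s_simple (i + 4)) * (t / (1 - t)) ^ (i + 4)) by (apply Rmult_le_pos; auto).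
  nra.
Qed.

Lemma P3 k t z : 0 <= t -> t <= z -> z < 1 -> Dl k t + 2 * (z - t) <= Dl k z.
Proof.
  intros H0 Htz Hz. unfold Dl.
  assert (HA : (2*t - t^2)/(1-t)^2 + 2*(z-t) <= (2*z - z^2)/(1-z)^2).
  { assert (E1 : (2*t - t^2)/(1-t)^2 = 1/(1-t)^2 - 1) by (field; lra).
    assert (E2 : (2*z - z^2)/(1-z)^2 = 1/(1-z)^2 - 1) by (field; lra).
    rewrite E1, E2. set (a := 1 - z). set (b := 1 - t).
    assert (0 < a) by (unfold a; lra). assert (a <= b) by (unfold a, b; lra).
    assert (b <= 1) by (unfold b; lra).
    replace (z - t) with (b - a) by (unfold a, b; ring).
    assert (E : 1/a^2 - 1/b^2 = (b-a)*(a+b)/(a^2*b^2)) by (field; lra).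
    assert (Hab : 0 < a^2*b^2) by (apply Rmult_lt_0_compat; apply pow_lt; lra).
    assert (Hq2 : 2 <= (a+b)/(a^2*b^2)).
    { apply Rmult_le_reg_r with (a^2*b^2); auto.
      unfold Rdiv. rewrite Rmult_assoc, Rinv_l by lra.
      assert (a*b <= a) by (assert (0 <= a*(1-b)) by (apply Rmult_le_pos; lra); nra). assert (0 < a*b) by (apply Rmult_lt_0_compat; lra). assert (a^2*b^2 <= a*b) by (assert (0 <= (a*b)*(1 - a*b)) by (apply Rmult_le_pos; lra); nra). lra. }
    assert (E' : (b-a)*(a+b)/(a^2*b^2) = (b-a)*((a+b)/(a^2*b^2))) by (unfold Rdiv; ring).
    assert (0 <= b - a) by lra.
    assert (2*(b-a) <= (b-a)*((a+b)/(a^2*b^2))) by nra.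
    lra. }
  assert (HS : sum_f_R0 (fun i => INR (s_simple (i + 4)) * (INR (i+4) * (t/(1-t))^(i+3) / (1-t)^2)) (k-4)
    <= sum_f_R0 (fun i => INR (s_simple (i + 4)) * (INR (i+4) * (z/(1-z))^(i+3) / (1-z)^2)) (k-4)).
  { apply sum_le. intros i. apply Rmult_le_compat_l; [apply s_nonneg|].
    unfold Rdiv. apply Rmult_le_compat.
    - apply Rmult_le_pos; [apply pos_INR| apply pow_le, y_nonneg; lra].
    - apply Rlt_le, Rinv_0_lt_compat, pow_lt; lra.
    - apply Rmult_le_compat_l; [apply pos_INR|]. apply pow_incr. split.
      + apply y_nonneg; lra.
      + unfold Rdiv. apply Rmult_le_compat; try lra. apply Rlt_le, Rinv_0_lt_compat; lra.
        apply Rinv_le_contravar; lra.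
    - apply Rinv_le_contravar. apply pow_lt; lra. apply pow_incr; lra. }
  lra.
Qed.

Lemma Lambda_lower k t : 0 <= t < 1 -> t^2 <= Lambda k t.
Proof.
  intros Ht. rewrite Lambda_eq.
  assert (0 <= sum_f_R0 (fun i => INR (s_simple (i + 4)) * (t / (1 - t)) ^ (i + 4)) (k - 4)).
  { apply sum_nonneg. intros i. apply Rmult_le_pos; [apply s_nonneg| apply pow_le, y_nonneg; auto]. }
  assert (t^2 <= t^2/(1-t)).
  { unfold Rdiv. rewrite <- (Rmult_1_r (t^2)) at 1. apply Rmult_le_compat_l. nra.
    rewrite <- Rinv_1. apply Rinv_le_contravar; lra. }
  lra.
Qed.

Lemma Lambda_upper k x : 0 <= x < 1 ->
  Lambda k x <= x^2/(1-x) + sum_f_R0 (fun i => INR (fact (i + 4)) * (x / (1 - x)) ^ (i + 4)) (k - 4).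
Proof.
  intros Hx. rewrite Lambda_eq. apply Rplus_le_compat_l, sum_le. intros i.
  apply Rmult_le_compat_r; [apply pow_le, y_nonneg; auto| apply s_le_factR].
Qed.

Module DerP.
Import Coquelicot.Coquelicot.
Lemma dpsi c : derivable_pt_lim (fun x => (1 + x) * exp (-x) - (1 - x) * exp x) c (c * (exp c - exp (-c))).
Proof. apply is_derive_Reals. auto_derive. auto. ring. Qed.
End DerP.

Lemma exp_pow_n x n : exp x ^ n = exp (INR n * x).
Proof. induction n. simpl. rewrite Rmult_0_l, exp_0. reflexivity.
  rewrite S_INR. simpl. rewrite IHn, <- exp_plus. f_equal. ring. Qed.

Lemma psi_nonneg v : 0 <= v -> (1 - v) * exp v <= (1 + v) * exp (-v).
Proof.
  intros Hv. destruct (Req_dec v 0) as [->|Hv0].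
  { rewrite Ropp_0, exp_0. lra. }
  set (psi := fun x => (1 + x) * exp (-x) - (1 - x) * exp x).
  set (psi' := fun x => x * (exp x - exp (-x))).
  assert (Hd : forall c, 0 <= c <= v -> derivable_pt_lim psi c (psi' c)).
  { intros c _. apply DerP.dpsi. }
  destruct (MVT_cor2 psi psi' 0 v ltac:(lra) Hd) as [c [Hc1 Hc2]].
  assert (psi 0 = 0) by (unfold psi; rewrite Ropp_0, exp_0; ring).
  assert (0 <= psi' c).
  { unfold psi'. apply Rmult_le_pos; [lra|]. assert (exp (-c) < exp c) by (apply exp_increasing; lra). lra. }
  assert (0 <= psi v) by nra.
  unfold psi in *. lra.
Qed.

Lemma key_ratio (j : nat) : (1 <= j)%nat -> exp 1 ^ 2 <= ((INR j + 1) / INR j) ^ (2*j+1).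
Proof.
  intros Hj. assert (Hn : 1 <= INR j) by (apply (le_INR 1); auto).
  set (n := INR j) in *.
  set (v := / (2*n+1)).
  assert (Hv : 0 < v < 1).
  { unfold v. split. apply Rinv_0_lt_compat; lra. rewrite <- Rinv_1. apply Rinv_lt_contravar; lra. }
  pose proof (psi_nonneg v (Rlt_le _ _ (proj1 Hv))) as Hp.
  assert (He : exp (2*v) <= (n+1)/n).
  { assert (E : (n+1)/n = (1+v)/(1-v)) by (unfold v; field; lra).
    rewrite E. apply Rmult_le_reg_r with (1 - v * exp 0 * 0 - v); [lra|].
    replace (1 - v * exp 0 * 0 - v) with (1 - v) by ring.
    unfold Rdiv. rewrite Rmult_assoc, Rinv_l by lra. rewrite Rmult_1_r.
    replace (2*v) with (v + v) by ring. rewrite exp_plus.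
    assert (exp v * exp (-v) = 1) by (rewrite <- exp_plus; replace (v + -v) with 0 by ring; apply exp_0).
    assert (0 < exp v) by apply exp_pos. nra. }
  rewrite exp_pow_n.
  replace (INR 2 * 1) with (INR (2*j+1) * (2*v)).
  2: { rewrite plus_INR, mult_INR. simpl (INR 2). simpl (INR 1). fold n. unfold v. field. lra. }
  rewrite <- exp_pow_n. apply pow_incr. split; [apply Rlt_le, exp_pos| exact He].
Qed.

Lemma key_step (j : nat) : (1 <= j)%nat ->
  exp 1 * sqrt (INR j) * INR j ^ j <= sqrt (INR j + 1) * (INR j + 1) ^ j.
Proof.
  intros Hj. pose proof (key_ratio j Hj) as Hk.
  assert (Hn : 1 <= INR j) by (apply (le_INR 1); auto).
  set (n := INR j) in *.
  assert (Hl : exp 1 * sqrt n * n ^ j = sqrt (exp 1 ^ 2 * n ^ (2*j+1))).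
  { rewrite sqrt_mult_alt by (apply pow_le, Rlt_le, exp_pos).
    rewrite sqrt_pow2 by (apply Rlt_le, exp_pos).
    replace (2*j+1)%nat with (S (2*j)) by lia.
    rewrite <- tech_pow_Rmult, pow_mult.
    replace ((n^2)^j) with ((n^j)^2) by (rewrite <- !pow_mult; f_equal; lia).
    rewrite sqrt_mult_alt by lra. rewrite sqrt_pow2 by (apply pow_le; lra). ring. }
  assert (Hr : sqrt (n+1) * (n+1)^j = sqrt ((n+1) ^ (2*j+1))).
  { replace (2*j+1)%nat with (S (2*j)) by lia.
    rewrite <- tech_pow_Rmult, pow_mult.
    replace (((n+1)^2)^j) with (((n+1)^j)^2) by (rewrite <- !pow_mult; f_equal; lia).
    rewrite sqrt_mult_alt by lra. rewrite sqrt_pow2 by (apply pow_le; lra). ring. }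
  rewrite Hl, Hr. apply sqrt_le_1_alt.
  replace ((n+1)^(2*j+1)) with (((n+1)/n)^(2*j+1) * n^(2*j+1)).
  2: { rewrite <- Rpow_mult_distr. f_equal. field. lra. }
  apply Rmult_le_compat_r; auto. apply pow_le; lra.
Qed.

Lemma stirling (j : nat) : (1 <= j)%nat ->
  INR (fact j) <= exp 1 * sqrt (INR j) * (INR j / exp 1) ^ j.
Proof.
  intros Hj.
  assert (H : INR (fact j) * exp 1 ^ j <= exp 1 * sqrt (INR j) * INR j ^ j).
  { induction j as [|j IH]. lia.
    destruct (Nat.eq_dec j 0) as [->|Hj0].
    - simpl. rewrite sqrt_1. lra.
    - assert (Hj1 : (1 <= j)%nat) by lia. specialize (IH Hj1).
      pose proof (key_step j Hj1) as Hs.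
      rewrite fact_simpl, mult_INR, S_INR.
      assert (0 <= INR j) by apply pos_INR.
      assert (0 < exp 1) by apply exp_pos.
      simpl pow.
      assert (INR j + 1 > 0) by lra.
      apply Rle_trans with ((INR j + 1) * exp 1 * (exp 1 * sqrt (INR j) * INR j ^ j)).
      + replace (( INR j + 1) * INR (fact j) * (exp 1 * exp 1 ^ j)) with
          ((INR j + 1) * exp 1 * (INR (fact j) * exp 1 ^ j)) by ring.
        apply Rmult_le_compat_l; auto. apply Rmult_le_pos; lra.
      + replace (exp 1 * sqrt (INR j + 1) * ((INR j + 1) * (INR j + 1) ^ j)) with
          ((INR j + 1) * exp 1 * (sqrt (INR j + 1) * (INR j + 1) ^ j)) by ring.
        apply Rmult_le_compat_l; auto. apply Rmult_le_pos; lra. }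
  assert (0 < exp 1 ^ j) by (apply pow_lt, exp_pos).
  unfold Rdiv. rewrite Rpow_mult_distr, pow_inv.
  apply Rmult_le_reg_r with (exp 1 ^ j); auto.
  replace (exp 1 * sqrt (INR j) * (INR j ^ j * / exp 1 ^ j) * exp 1 ^ j) with (exp 1 * sqrt (INR j) * INR j ^ j) by (field; lra). lra.
Qed.

Lemma geom_rev r N : 0 <= r < 1 -> sum_f_R0 (fun i => r ^ (N - i)) N <= 1/(1-r).
Proof.
  intros Hr. induction N.
  - simpl. apply Rmult_le_reg_r with (1-r); [lra|]. unfold Rdiv. rewrite Rmult_assoc, Rinv_l by lra. nra.
  - rewrite tech5. rewrite Nat.sub_diag. simpl pow at 2.
    assert (E : sum_f_R0 (fun i => r ^ (S N - i)) N = r * sum_f_R0 (fun i => r ^ (N - i)) N).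
    { rewrite <- sum_scal. apply sum_eq. intros i Hi. replace (S N - i)%nat with (S (N - i)) by lia. simpl. ring. }
    rewrite E.
    assert (r * sum_f_R0 (fun i => r ^ (N - i)) N <= r * (1/(1-r))) by (apply Rmult_le_compat_l; lra).
    assert (E2 : r * (1/(1-r)) + 1 = 1/(1-r)) by (field; lra). lra.
Qed.

Lemma exp_neg52 (x : R) : 0 < x -> exp (-(5/2) * ln x) = / (x^2 * sqrt x).
Proof.
  intros Hx. rewrite <- Rpower_sqrt by auto. unfold Rpower.
  replace (x^2) with (exp (ln x) ^ 2) by (rewrite exp_ln; auto).
  rewrite exp_pow_n, <- exp_plus. rewrite <- exp_Ropp. f_equal. simpl (INR 2). field.
Qed.

Lemma term_big (k j : nat) (p : R) : 10000 <= INR k -> (4 <= j <= k)%nat -> INR k <= 3 * INR j ->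
  p = exp (-(5/2) * (ln (INR k) / INR k)) -> 5/2 * (ln (INR k) / INR k) <= 1/12 ->
  INR (fact j) * (exp 1 * p / INR k) ^ j <= exp 1 / INR k ^ 2 * exp (-1/4) ^ (k - j).
Proof.
  intros Hk Hj H3 Hp HL.
  set (kr := INR k) in *. set (n := INR j) in *.
  assert (Hn : 4 <= n) by (unfold n; replace 4 with (INR 4) by (simpl; lra); apply le_INR; lia).
  assert (Hm : INR (k - j) = kr - n) by (unfold kr, n; rewrite minus_INR; [auto|lia]).
  set (m := kr - n) in *.
  assert (Hm0 : 0 <= m) by (rewrite <- Hm; apply pos_INR).
  assert (Hkp : 0 < kr) by lra.
  assert (He : 0 < exp 1) by apply exp_pos.
  assert (Hpp : 0 < p) by (rewrite Hp; apply exp_pos).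
  pose proof (stirling j ltac:(lia)) as Hs. fold n in Hs.
  apply Rle_trans with (exp 1 * sqrt n * (n / exp 1) ^ j * (exp 1 * p / kr) ^ j).
  { apply Rmult_le_compat_r; auto. apply pow_le. apply Rmult_le_pos; [apply Rmult_le_pos; lra|].
    apply Rlt_le, Rinv_0_lt_compat; lra. }
  rewrite Rmult_assoc, <- Rpow_mult_distr.
  replace (n / exp 1 * (exp 1 * p / kr)) with (n / kr * p) by (field; lra).
  rewrite Rpow_mult_distr.
  assert (H1 : n / kr <= exp (- m / kr)).
  { pose proof (exp_ineq1_le (- m / kr)). replace (n/kr) with (1 + - m / kr) by (unfold m; field; lra). lra. }
  assert (H2 : (n / kr) ^ j * p ^ j <= exp (INR j * (- m / kr + - (5/2) * (ln kr / kr)))).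
  { assert (E : exp (INR j * (- m / kr + - (5/2) * (ln kr / kr))) =
       exp (- m / kr) ^ j * exp (- (5/2) * (ln kr / kr)) ^ j)
      by (rewrite !exp_pow_n, <- exp_plus; f_equal; ring).
    rewrite E, <- Hp.
    apply Rmult_le_compat_r. apply pow_le; lra.
    apply pow_incr. split; auto. apply Rmult_le_pos; [lra| apply Rlt_le, Rinv_0_lt_compat; lra]. }
  assert (Hq : 1/3 <= n / kr).
  { apply Rmult_le_reg_r with kr; auto. replace (n / kr * kr) with n by (field; lra). lra. }
  set (L := ln kr / kr) in *.
  assert (EL : n * L = ln kr - m * L) by (unfold L, m; field; lra).
  assert (Eq : n * (- m / kr) = - m * (n / kr)) by (field; lra).
  assert (Hexp : INR j * (- m / kr + - (5/2) * L) <= - (5/2) * ln kr + INR (k - j) * (-1/4)).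
  { fold n. rewrite Hm. rewrite Rmult_plus_distr_l, Eq.
    replace (n * (- (5/2) * L)) with (- (5/2) * (n * L)) by ring. rewrite EL.
    assert (0 <= m * (n / kr - 5/2 * L - 1/4)) by (apply Rmult_le_pos; lra). nra. }
  assert (H4 : (n / kr) ^ j * p ^ j <= exp (- (5/2) * ln kr) * exp (-1/4) ^ (k - j)).
  { rewrite exp_pow_n, <- exp_plus. eapply Rle_trans; [exact H2|].
    destruct (Rle_lt_or_eq_dec _ _ Hexp) as [Hlt|Heq]. apply Rlt_le, exp_increasing; auto.
    rewrite Heq; lra. }
  rewrite exp_neg52 in H4 by auto.
  assert (Hnk : n <= kr) by (unfold n, kr; apply le_INR; lia).
  assert (Hsq : sqrt n <= sqrt kr) by (apply sqrt_le_1_alt; lra).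
  assert (Hsk : 0 < sqrt kr) by (apply sqrt_lt_R0; lra).
  assert (0 <= exp (-1/4) ^ (k - j)) by (apply pow_le, Rlt_le, exp_pos).
  assert (0 <= (n / kr) ^ j * p ^ j).
  { apply Rmult_le_pos; apply pow_le; [apply Rmult_le_pos; [lra|apply Rlt_le, Rinv_0_lt_compat; lra]|lra]. }
  apply Rle_trans with (exp 1 * sqrt kr * (/ (kr ^ 2 * sqrt kr) * exp (-1 / 4) ^ (k - j))).
  { apply Rmult_le_compat; auto. apply Rmult_le_pos; [lra| apply sqrt_pos].
    apply Rmult_le_compat_l; lra. }
  right. field. split; lra.
Qed.

Lemma mono_small (kr : R) (d : nat) : 0 < kr -> INR (4 + d) * exp 1 <= kr ->
  INR (fact (4 + d)) * (exp 1 / kr) ^ (4 + d) <= 24 * (exp 1 / kr) ^ 4.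
Proof.
  intros Hk. assert (He : 0 < exp 1) by apply exp_pos.
  assert (Hx : 0 < exp 1 / kr) by (apply Rdiv_lt_0_compat; auto).
  induction d as [|d IH]; intros Hd.
  - simpl (fact (4+0)). replace (4+0)%nat with 4%nat by lia. simpl (INR 24). right. simpl. ring.
  - assert (Hd' : INR (4 + d) * exp 1 <= kr).
    { eapply Rle_trans; [|exact Hd]. apply Rmult_le_compat_r; [lra|]. apply le_INR; lia. }
    specialize (IH Hd').
    replace (4 + S d)%nat with (S (4 + d)) by lia.
    rewrite fact_simpl, mult_INR, <- tech_pow_Rmult.
    replace (INR (S (4 + d)) * INR (fact (4 + d)) * (exp 1 / kr * (exp 1 / kr) ^ (4 + d)))
      with ((INR (S (4 + d)) * (exp 1 / kr)) * (INR (fact (4 + d)) * (exp 1 / kr) ^ (4 + d))) by ring.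
    assert (Hr : INR (S (4 + d)) * (exp 1 / kr) <= 1).
    { replace (INR (S (4 + d)) * (exp 1 / kr)) with (INR (S (4+d)) * exp 1 / kr) by (field; lra).
      apply Rmult_le_reg_r with kr; auto. replace (INR (S (4 + d)) * exp 1 / kr * kr) with (INR (S (4 + d)) * exp 1) by (field; lra).
      replace (4 + S d)%nat with (S (4 + d)) in Hd by lia. lra. }
    assert (0 <= INR (fact (4 + d)) * (exp 1 / kr) ^ (4 + d)).
    { apply Rmult_le_pos; [apply pos_INR| apply pow_le; lra]. }
    assert (0 <= INR (S (4 + d)) * (exp 1 / kr)) by (apply Rmult_le_pos; [apply pos_INR|lra]).
    nra.
Qed.

Lemma term_small (k j : nat) (y : R) : 10000 <= INR k -> (4 <= j)%nat -> 3 * INR j < INR k ->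
  0 <= y <= exp 1 / INR k -> INR (fact j) * y ^ j <= 24 * exp 1 ^ 4 / INR k ^ 4.
Proof.
  intros Hk Hj H3 Hy.
  assert (He3 : exp 1 <= 3) by apply exp_le_3.
  assert (He : 0 < exp 1) by apply exp_pos.
  replace j with (4 + (j - 4))%nat by lia.
  apply Rle_trans with (INR (fact (4 + (j - 4))) * (exp 1 / INR k) ^ (4 + (j - 4))).
  { apply Rmult_le_compat_l; [apply pos_INR|]. apply pow_incr; lra. }
  eapply Rle_trans. apply mono_small. lra.
  { replace (4 + (j - 4))%nat with j by lia. assert (0 <= INR j) by apply pos_INR. nra. }
  right. field. lra.
Qed.

Lemma r_bound : 0 <= exp (-1/4) <= 4/5.
Proof.
  split. apply Rlt_le, exp_pos.
  pose proof (exp_ineq1_le (1/4)).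
  replace (-1/4) with (- (1/4)) by field. rewrite exp_Ropp.
  replace (4/5) with (/ (5/4)) by field. apply Rinv_le_contravar; lra.
Qed.

Lemma sum_bound (k : nat) : 10000 <= INR k -> (4 <= k)%nat ->
  5/2 * (ln (INR k) / INR k) <= 1/12 ->
  sum_f_R0 (fun i => INR (fact (i+4)) * (exp 1 * exp (-(5/2) * (ln (INR k) / INR k)) / INR k)^(i+4)) (k-4)
  <= 6 * exp 1 / INR k ^ 2.
Proof.
  intros Hk Hk4 HL.
  set (p := exp (-(5/2) * (ln (INR k) / INR k))).
  set (kr := INR k) in *.
  assert (He : 0 < exp 1) by apply exp_pos.
  assert (He3 : exp 1 <= 3) by apply exp_le_3.
  assert (Hp1 : 0 < p <= 1).
  { split. apply exp_pos. unfold p. rewrite <- exp_0.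
    assert (0 <= ln kr / kr).
    { apply Rmult_le_pos. rewrite <- ln_1. apply Rlt_le, ln_increasing; lra. apply Rlt_le, Rinv_0_lt_compat; lra. }
    destruct (Rle_lt_or_eq_dec (-(5/2) * (ln kr / kr)) 0 ltac:(lra)) as [Hq|Hq].
    apply Rlt_le, exp_increasing; auto. rewrite Hq; lra. }
  set (c4 := 24 * exp 1 ^ 4 / kr ^ 4).
  assert (Hc4 : 0 <= c4).
  { unfold c4. apply Rmult_le_pos. apply Rmult_le_pos; [lra| apply pow_le; lra].
    apply Rlt_le, Rinv_0_lt_compat, pow_lt; lra. }
  pose proof r_bound as Hr.
  eapply Rle_trans.
  { apply (sum_Rle _ (fun i => exp 1 / kr ^ 2 * exp (-1/4) ^ ((k-4) - i) + c4)).
    intros i Hi.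
    assert (Hb0 : 0 <= exp 1 / kr ^ 2 * exp (-1/4) ^ ((k-4) - i)).
    { apply Rmult_le_pos. apply Rmult_le_pos; [lra| apply Rlt_le, Rinv_0_lt_compat, pow_lt; lra].
      apply pow_le; lra. }
    destruct (Rle_lt_dec kr (3 * INR (i+4))) as [Hc|Hc].
    - pose proof (term_big k (i+4) p Hk ltac:(lia) Hc eq_refl HL) as T.
      replace (k - (i+4))%nat with ((k-4) - i)%nat in T by lia. fold kr in T. lra.
    - pose proof (term_small k (i+4) (exp 1 * p / kr) Hk ltac:(lia) Hc) as T.
      assert (0 <= exp 1 * p / kr <= exp 1 / kr).
      { split. apply Rmult_le_pos; [apply Rmult_le_pos; lra| apply Rlt_le, Rinv_0_lt_compat; lra].
        unfold Rdiv. apply Rmult_le_compat_r. apply Rlt_le, Rinv_0_lt_compat; lra. nra. }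
      specialize (T H). fold kr in T. fold c4 in T. lra. }
  rewrite sum_plus, sum_cte, sum_scal.
  pose proof (geom_rev (exp (-1/4)) (k-4) ltac:(lra)) as G.
  assert (G5 : 1 / (1 - exp (-1/4)) <= 5).
  { apply Rmult_le_reg_r with (1 - exp (-1/4)); [lra|]. replace (1 / (1 - exp (-1 / 4)) * (1 - exp (-1 / 4))) with 1 by (field; lra). lra. }
  assert (Hkk : INR (S (k - 4)) <= kr).
  { unfold kr. apply le_INR. lia. }
  assert (Hekr : 0 <= exp 1 / kr ^ 2).
  { apply Rmult_le_pos; [lra| apply Rlt_le, Rinv_0_lt_compat, pow_lt; lra]. }
  assert (A1 : exp 1 / kr ^ 2 * sum_f_R0 (fun i => exp (-1 / 4) ^ (k - 4 - i)) (k - 4) <= 5 * exp 1 / kr^2).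
  { replace (5 * exp 1 / kr^2) with (exp 1 / kr ^ 2 * 5) by (field; lra).
    apply Rmult_le_compat_l; lra. }
  assert (A2 : c4 * INR (S (k - 4)) <= exp 1 / kr ^ 2).
  { apply Rle_trans with (c4 * kr). apply Rmult_le_compat_l; auto.
    unfold c4. replace (24 * exp 1 ^ 4 / kr ^ 4 * kr) with ((24 * exp 1 ^ 3) * (exp 1 / kr^2) / kr) by (field; lra).
    assert (24 * exp 1 ^ 3 <= kr).
    { assert (exp 1 ^ 3 <= 27). { replace 27 with (3^3) by ring. apply pow_incr; lra. } lra. }
    apply Rmult_le_reg_r with kr; [lra|].
    replace (24 * exp 1 ^ 3 * (exp 1 / kr ^ 2) / kr * kr) with (24 * exp 1 ^ 3 * (exp 1 / kr ^ 2)) by (field; lra).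
    rewrite (Rmult_comm (exp 1 / kr ^ 2) kr). apply Rmult_le_compat_r; lra. }
  replace (6 * exp 1 / kr ^ 2) with (5 * exp 1 / kr ^ 2 + exp 1 / kr ^ 2) by (field; lra).
  lra.
Qed.

Lemma S3 (rho r0 : R) (m : nat) : 0 < r0 -> r0 <= rho -> rho <= 1/4 -> 32 * r0 < 1 ->
  sqrt r0 * r0 ^ m * (1 - 32 * r0)^2 <= sqrt rho * rho ^ m * (1 - 2 * rho)^2.
Proof.
  intros H0 H1 H2 H3.
  assert (Hs0 : 0 <= sqrt r0) by apply sqrt_pos.
  assert (Hp0 : 0 <= r0 ^ m) by (apply pow_le; lra).
  destruct (Rle_lt_dec rho (16 * r0)) as [Hc|Hc].
  - apply Rmult_le_compat.
    + apply Rmult_le_pos; auto.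
    + apply pow2_ge_0.
    + apply Rmult_le_compat; auto. apply sqrt_le_1_alt; lra. apply pow_incr; lra.
    + apply pow_incr; lra.
  - assert (Hsq : 4 * sqrt r0 <= sqrt rho).
    { replace (4 * sqrt r0) with (sqrt (16 * r0)).
      apply sqrt_le_1_alt; lra.
      rewrite sqrt_mult_alt by lra. replace 16 with (4^2) by ring. rewrite sqrt_pow2; lra. }
    assert (Hpm : r0 ^ m <= rho ^ m) by (apply pow_incr; lra).
    assert (Ha : (1 - 32 * r0)^2 <= 1) by nra.
    assert (Hb : 1/4 <= (1 - 2 * rho)^2) by nra.
    apply Rle_trans with (sqrt r0 * r0 ^ m).
    { rewrite <- (Rmult_1_r (sqrt r0 * r0 ^ m)) at 2. apply Rmult_le_compat_l; auto. apply Rmult_le_pos; auto. }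
    apply Rle_trans with ((4 * sqrt r0) * r0 ^ m * (1/4)).
    { right; field. }
    apply Rmult_le_compat; try lra.
    apply Rmult_le_pos; lra.
    apply Rmult_le_compat; lra.
Qed.

Lemma final_alg (rho tau L2 r0 kr B N : R) (n : nat) :
  (1 <= n)%nat -> 0 < r0 -> r0 <= rho -> tau <= 2 * rho -> 0 < tau < 1 -> rho <= 1/4 ->
  2 <= L2 -> 0 < kr -> r0 <= exp 1 / kr -> 32 * (exp 1 / kr) < 1 ->
  1 <= (1 - 32 * (exp 1 / kr))^2 * (r0 * kr / exp 1) * B -> 0 < N ->
  sqrt (rho / (2 * PI * L2)) / (1 - tau) ^ 2 * / rho ^ n * N
  <= 1 / (1 - exp 1 / kr) ^ 2 * sqrt (exp 1 / (4 * PI * kr)) * (kr / exp 1) ^ n * B ^ n * N.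
Proof.
  intros Hn Hr0 Hr Ht Ht1 Hr4 HL2 Hk Hre H32 HB HN.
  assert (He : 0 < exp 1) by apply exp_pos.
  assert (HPI : 0 < PI) by apply PI_RGT_0.
  assert (Hrho : 0 < rho) by lra.
  set (c := sqrt (/ (4 * PI))).
  assert (Hc : 0 < c) by (apply sqrt_lt_R0, Rinv_0_lt_compat; lra).
  destruct n as [|m]; [lia|].
  assert (Hg : sqrt (rho / (2 * PI * L2)) <= c * sqrt rho).
  { unfold c. rewrite <- sqrt_mult_alt by (apply Rlt_le, Rinv_0_lt_compat; lra).
    apply sqrt_le_1_alt. unfold Rdiv. rewrite Rmult_comm. apply Rmult_le_compat_r; [lra|].
    apply Rinv_le_contravar. lra. nra. }
  assert (Hsr : 0 < sqrt rho) by (apply sqrt_lt_R0; lra).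
  assert (E1 : rho ^ S m = sqrt rho * (sqrt rho * rho ^ m)).
  { simpl. rewrite <- Rmult_assoc, sqrt_sqrt; lra. }
  assert (H12 : 0 < 1 - 2 * rho) by lra.
  assert (Hpm : 0 < rho ^ m) by (apply pow_lt; lra).
  assert (HL : sqrt (rho / (2 * PI * L2)) / (1 - tau) ^ 2 * / rho ^ S m
      <= c / (sqrt rho * rho ^ m * (1 - 2 * rho)^2)).
  { rewrite E1. 
    apply Rle_trans with (c * sqrt rho / (1 - 2 * rho) ^ 2 * / (sqrt rho * (sqrt rho * rho ^ m))).
    - apply Rmult_le_compat_r. apply Rlt_le, Rinv_0_lt_compat. apply Rmult_lt_0_compat; auto. apply Rmult_lt_0_compat; auto.
      unfold Rdiv. apply Rmult_le_compat; auto. apply sqrt_pos. apply Rlt_le, Rinv_0_lt_compat, pow_lt; lra.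
      apply Rinv_le_contravar. apply pow_lt; lra. apply pow_incr; lra.
    - right. field. repeat split; lra. }
  pose proof (S3 rho r0 m Hr0 Hr Hr4 ltac:(nra)) as HS3.
  assert (Hsr0 : 0 < sqrt r0) by (apply sqrt_lt_R0; lra).
  assert (Hr0m : 0 < r0 ^ m) by (apply pow_lt; lra).
  assert (H32r : 0 < 1 - 32 * r0).
  { lra. }
  assert (HL' : c / (sqrt rho * rho ^ m * (1 - 2 * rho)^2) <= c / (sqrt r0 * r0 ^ m * (1 - 32 * r0)^2)).
  { unfold Rdiv. apply Rmult_le_compat_l; [lra|]. apply Rinv_le_contravar; auto.
    apply Rmult_lt_0_compat. apply Rmult_lt_0_compat; auto. apply pow_lt; lra. }
  set (q := r0 * kr / exp 1) in *.
  assert (Hq : 0 < q) by (unfold q; apply Rdiv_lt_0_compat; [apply Rmult_lt_0_compat|]; lra).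
  assert (Hr0q : r0 = q * (exp 1 / kr)) by (unfold q; field; lra).
  assert (Hek : 0 < exp 1 / kr) by (apply Rdiv_lt_0_compat; lra).
  assert (Ha1 : 0 <= 1 - 32 * (exp 1 / kr)) by lra.
  assert (Ha2 : 1 - 32 * (exp 1 / kr) <= 1 - 32 * r0) by lra.
  assert (Hsq2 : (1 - 32 * (exp 1 / kr))^2 <= 1) by nra.
  assert (HqB : 1 <= q * B).
  { assert (0 <= (1 - 32 * (exp 1 / kr))^2) by apply pow2_ge_0.
    destruct (Rle_lt_dec (q*B) 0). nra. nra. }
  assert (HqBn : q * B <= (q * B) ^ S m).
  { clear -HqB. induction m. simpl; lra. simpl in *. nra. }
  assert (Hx : (1 - exp 1 / kr)^2 <= (1 - 32 * r0)^2 * (q * B) ^ S m).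
  { assert (Hek2 : (1 - exp 1 / kr)^2 <= 1).
    { assert (exp 1 / kr < 1). { unfold Rdiv in *. nra. } nra. }
    assert ((1 - 32 * (exp 1 / kr))^2 <= (1 - 32 * r0)^2) by (apply pow_incr; lra).
    assert (0 <= (1 - 32 * (exp 1 / kr))^2) by apply pow2_ge_0.
    assert (1 <= (1 - 32 * r0)^2 * (q*B)).
    { apply Rle_trans with ((1 - 32 * (exp 1 / kr)) ^ 2 * q * B); auto. 
      rewrite Rmult_assoc. apply Rmult_le_compat_r; lra. }
    assert (0 <= (1 - 32 * r0)^2) by apply pow2_ge_0.
    assert ((1 - 32 * r0)^2 * (q*B) <= (1 - 32 * r0)^2 * (q*B)^S m) by (apply Rmult_le_compat_l; lra).
    lra. }
  assert (HsE : sqrt r0 <= sqrt (exp 1 / kr)).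
  { apply sqrt_le_1_alt. exact Hre. }
  assert (HR : c / (sqrt r0 * r0 ^ m * (1 - 32 * r0)^2) <=
     1 / (1 - exp 1 / kr) ^ 2 * sqrt (exp 1 / (4 * PI * kr)) * (kr / exp 1) ^ S m * B ^ S m).
  { replace (sqrt (exp 1 / (4 * PI * kr))) with (c * sqrt (exp 1 / kr)).
    2: { unfold c. rewrite <- sqrt_mult_alt by (apply Rlt_le, Rinv_0_lt_compat; lra). f_equal. field; lra. }
    set (a := exp 1 / kr) in *.
    set (W := (1 - 32 * r0)^2) in *.
    assert (HW : 0 < W) by (unfold W; apply pow_lt; lra).
    assert (Es : r0 = sqrt r0 * sqrt r0) by (rewrite sqrt_sqrt; lra).
    assert (Hqm : 0 < q ^ S m) by (apply pow_lt; lra).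
    assert (Ham : 0 < a ^ S m) by (apply pow_lt; lra).
    assert (E2 : c / (sqrt r0 * r0 ^ m * W) = (c * sqrt r0 / a ^ S m) * / (q ^ S m * W)).
    { transitivity (c * sqrt r0 / ((sqrt r0 * sqrt r0) * r0 ^ m * W)).
      field. repeat split; lra.
      rewrite <- Es. replace (r0 * r0 ^ m) with (r0 ^ S m) by reflexivity.
      rewrite Hr0q, Rpow_mult_distr. field. repeat split; lra. }
    assert (E3 : 1 / (1 - a) ^ 2 * (c * sqrt a) * (/ a) ^ S m * B ^ S m
        = (c * sqrt a / a ^ S m) * (B ^ S m / (1 - a) ^ 2)).
    { rewrite pow_inv. field. split; [lra|]. assert (a < 1) by lra. apply pow_nonzero. lra. }
    rewrite E2.
    replace (kr / exp 1) with (/ a) by (unfold a; field; lra).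
    rewrite E3.
    assert (Hp1 : 0 < 1 - a) by lra.
    apply Rmult_le_compat.
    - unfold Rdiv. apply Rmult_le_pos; [apply Rmult_le_pos; lra|]. apply Rlt_le, Rinv_0_lt_compat; lra.
    - apply Rlt_le, Rinv_0_lt_compat. apply Rmult_lt_0_compat; lra.
    - unfold Rdiv. apply Rmult_le_compat_r. apply Rlt_le, Rinv_0_lt_compat; lra.
      apply Rmult_le_compat_l; lra.
    - assert (Hp2 : 0 < (1 - a)^2) by (apply pow_lt; lra).
      rewrite Rpow_mult_distr in Hx.
      apply Rmult_le_reg_r with ((1 - a)^2 * (q ^ S m * W)).
      apply Rmult_lt_0_compat; [lra| apply Rmult_lt_0_compat; lra].
      replace (/ (q ^ S m * W) * ((1 - a) ^ 2 * (q ^ S m * W))) with ((1 - a)^2) by (field; lra).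
      replace (B ^ S m / (1 - a) ^ 2 * ((1 - a) ^ 2 * (q ^ S m * W))) with (W * (q ^ S m * B ^ S m)) by (field; lra).
      lra.
  }
  apply Rmult_le_compat_r; [lra|].
  eapply Rle_trans; [exact HL|]. eapply Rle_trans; [exact HL'|]. exact HR.
Qed.

Lemma num_final (kr Lq q : R) : 10000 <= kr -> 0 <= Lq -> (Lq * kr + 220)^2 <= 16 * kr ->
  q >= 1 - Lq - 12 / kr -> 1 <= (1 - 32 * (exp 1 / kr))^2 * q * (1 + Lq + 220 / kr).
Proof.
  intros Hk HL Hsq Hq.
  assert (He : exp 1 <= 3) by apply exp_le_3.
  assert (He0 : 0 < exp 1) by apply exp_pos.
  set (t := / kr).
  assert (Ht : 0 < t) by (unfold t; apply Rinv_0_lt_compat; lra).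
  assert (Htk : t * kr = 1) by (unfold t; field; lra).
  assert (Ht1 : t <= 1/10000).
  { unfold t. unfold Rdiv. rewrite Rmult_1_l. apply Rinv_le_contravar; lra. }
  replace (exp 1 / kr) with (exp 1 * t) by (unfold t; field; lra).
  replace (12 / kr) with (12 * t) in Hq by (unfold t; field; lra).
  replace (220 / kr) with (220 * t) by (unfold t; field; lra).
  assert (HLq : Lq + 220 * t <= 4 * sqrt t).
  {
    assert (H2 : (Lq + 220 * t)^2 <= 16 * t).
    { replace (Lq + 220 * t) with ((Lq * kr + 220) * t) by (unfold t; field; lra).
      rewrite Rpow_mult_distr.
      apply Rle_trans with (16 * kr * t^2). apply Rmult_le_compat_r; [apply pow2_ge_0|lra].
      right. replace (t^2) with (t*t) by ring. rewrite <- Rmult_assoc, (Rmult_assoc 16 kr t). 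
      rewrite (Rmult_comm kr t), Htk. ring. }
    assert (Hs : sqrt (16 * t) = 4 * sqrt t).
    { rewrite sqrt_mult_alt by lra. replace 16 with (4^2) by ring. rewrite sqrt_pow2; lra. }
    rewrite <- Hs. rewrite <- (sqrt_pow2 (Lq + 220 * t)) by lra. apply sqrt_le_1_alt; auto. }
  assert (Hab : (Lq + 204 * t) * (Lq + 220 * t) <= 16 * t).
  { assert (H2 : (Lq + 220 * t)^2 <= 16 * t).
    { assert (0 <= sqrt t) by apply sqrt_pos.
      assert ((4 * sqrt t)^2 = 16 * t) by (rewrite Rpow_mult_distr, pow2_sqrt; lra).
      assert (0 <= Lq + 220 * t) by lra.
      nra. }
    nra. }
  assert (HA : 1 - 192 * t <= (1 - 32 * (exp 1 * t))^2).
  { assert (32 * (exp 1 * t) <= 96 * t) by nra. nra. }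
  assert (HA0 : 0 <= 1 - 192 * t) by lra.
  assert (Hb : 0 < 1 + Lq + 220 * t) by lra.
  assert (Hq0 : 0 <= 1 - Lq - 12 * t).
  { assert (Lq <= 4 * sqrt t) by lra.
    assert (sqrt t <= 1/100).
    { replace (1/100) with (sqrt ((1/100)^2)) by (rewrite sqrt_pow2; lra). apply sqrt_le_1_alt; lra. }
    lra. }
  apply Rle_trans with ((1 - 192 * t) * (1 - Lq - 12 * t) * (1 + Lq + 220 * t)).
  { assert (0 <= 192 * t * (Lq + 12 * t)) by (apply Rmult_le_pos; lra). nra. }
  apply Rmult_le_compat_r; [lra|]. apply Rmult_le_compat; lra.
Qed.

Lemma ln_facts (kr : R) : 10000 <= kr ->
  0 <= 5/2 * (ln kr / kr) /\ 5/2 * (ln kr / kr) <= 1/12 /\ (5/2 * (ln kr / kr) * kr + 220)^2 <= 16 * kr.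
Proof.
  intros Hk.
  set (s := sqrt (sqrt kr)).
  assert (Hs4 : kr = s^4).
  { unfold s. replace (sqrt (sqrt kr) ^ 4) with ((sqrt (sqrt kr) * sqrt (sqrt kr)) * (sqrt (sqrt kr) * sqrt (sqrt kr))) by ring.
    rewrite !sqrt_sqrt; try lra. apply sqrt_pos. }
  assert (Hs10 : 10 <= s).
  { unfold s. replace 10 with (sqrt (sqrt 10000)).
    apply sqrt_le_1_alt, sqrt_le_1_alt; lra.
    replace 10000 with (100^2) by ring. rewrite sqrt_pow2 by lra.
    replace 100 with (10^2) by ring. rewrite sqrt_pow2; lra. }
  assert (Hln : ln kr = 4 * ln s).
  { rewrite Hs4, ln_pow by lra. simpl (INR 4). ring. }
  assert (Hls : ln s <= s).
  { pose proof (exp_ineq1_le (s - 1)).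
    assert (ln s <= s - 1).
    { destruct (Rle_lt_or_eq_dec s (exp (s-1)) ltac:(lra)) as [Hl|He].
      - apply Rlt_le. rewrite <- (ln_exp (s-1)). apply ln_increasing; lra.
      - rewrite He, ln_exp. lra. }
    lra. }
  assert (Hl0 : 0 <= ln s).
  { destruct (Rle_lt_or_eq_dec 1 s ltac:(lra)) as [Hl|He].
    - rewrite <- ln_1. apply Rlt_le, ln_increasing; lra.
    - rewrite <- He, ln_1; lra. }
  assert (Hkp : 0 < kr) by lra.
  assert (E : 5/2 * (ln kr / kr) * kr = 10 * ln s) by (rewrite Hln; field; lra).
  rewrite E.
  assert (Hs2 : 100 <= s^2) by nra.
  split; [|split].
  - apply Rmult_le_pos; [lra|]. apply Rmult_le_pos. rewrite Hln; lra. apply Rlt_le, Rinv_0_lt_compat; lra.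
  - replace (5/2 * (ln kr / kr)) with (10 * ln s / kr) by (rewrite Hln; field; lra).
    apply Rmult_le_reg_r with kr; auto. replace (10 * ln s / kr * kr) with (10 * ln s) by (field; lra).
    rewrite Hs4. assert (s^4 >= 1000 * s) by nra. nra.
  - rewrite Hs4. assert (10 * ln s + 220 <= 32 * s) by lra.
    assert (0 <= 10 * ln s + 220) by lra.
    assert ((10 * ln s + 220)^2 <= (32 * s)^2) by (apply pow_incr; lra).
    nra.
Qed.

Lemma L2_ge (k : nat) (L1 : R -> R) (tau L2 : R) :
  (forall x, 0 < x < 1 -> derivable_pt_lim (Lambda k) x (L1 x)) -> 0 < tau < 1 ->
  derivable_pt_lim L1 tau L2 -> 2 <= L2.
Proof.
  intros Hd Ht H2.
  destruct (Rle_lt_dec 2 L2) as [|Hl]; auto. exfalso.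
  destruct (H2 (2 - L2) ltac:(lra)) as [delta Hdel].
  set (h := Rmin (delta/2) ((1 - tau)/2)).
  assert (Hdp : 0 < delta) by apply cond_pos.
  assert (Hh0 : 0 < h) by (unfold h; apply Rmin_pos; lra).
  assert (Hh1 : h <= (1 - tau)/2) by apply Rmin_r.
  assert (Hh2 : h <= delta/2) by apply Rmin_l.
  specialize (Hdel h ltac:(lra) ltac:(rewrite Rabs_right; lra)).
  assert (E1 : L1 tau = Dl k tau) by (apply (uniqueness_limite (Lambda k) tau); [apply Hd; auto| apply Lambda_deriv; lra]).
  assert (E2 : L1 (tau + h) = Dl k (tau + h)) by (apply (uniqueness_limite (Lambda k) (tau+h)); [apply Hd; lra| apply Lambda_deriv; lra]).
  rewrite E1, E2 in Hdel.
  pose proof (P3 k tau (tau + h) ltac:(lra) ltac:(lra) ltac:(lra)) as HP.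
  assert (2 <= (Dl k (tau + h) - Dl k tau) / h).
  { apply Rmult_le_reg_r with h; auto. replace ((Dl k (tau + h) - Dl k tau) / h * h) with (Dl k (tau + h) - Dl k tau) by (field; lra). lra. }
  apply Rabs_def2 in Hdel. lra.
Qed.

Lemma INR_10000 : INR 10000 = 10000.
Proof. rewrite INR_IZR_INZ. reflexivity. Qed.

Theorem mainTheorem13 :
  forall (tau : nat -> R) (L1 : nat -> R -> R) (L2 : nat -> R),
    (forall k : nat, (4 <= k)%nat ->
       (forall x : R, 0 < x < 1 -> derivable_pt_lim (Lambda k) x (L1 k x)) /\
       0 < tau k < 1 /\
       L1 k (tau k) = 1 /\
       derivable_pt_lim (L1 k) (tau k) (L2 k)) ->
    exists (C : R) (K : nat), C > 0 /\
      forall k n : nat, (K <= k)%nat -> (4 <= k)%nat -> (1 <= n)%nat ->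
        let rho := tau k - Lambda k (tau k) in
        let gamma := sqrt (rho / (2 * PI * L2 k)) in
        gamma / (1 - tau k) ^ 2 * / rho ^ n * Rpower (INR n) (- (3 / 2))
        <= 1 / (1 - exp 1 / INR k) ^ 2 * sqrt (exp 1 / (4 * PI * INR k))
           * (INR k / exp 1) ^ n
           * (1 + 5 / 2 * (ln (INR k) / INR k) + C / INR k) ^ n
           * Rpower (INR n) (- (3 / 2)).
Proof.
  intros tau L1 L2 H.
  exists 220, 10000%nat. split; [lra|].
  intros k n HK Hk4 Hn rho gamma.
  destruct (H k Hk4) as [Hd [Ht [H1 H2d]]].
  assert (Hkr : 10000 <= INR k) by (rewrite <- INR_10000; apply le_INR; auto).
  set (kr := INR k) in *.
  set (t := tau k) in *.
  assert (HD1 : Dl k t = 1).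
  { rewrite <- H1. apply (uniqueness_limite (Lambda k) t); [apply Lambda_deriv; lra| apply Hd; auto]. }
  assert (He : 0 < exp 1) by apply exp_pos.
  assert (He3 : exp 1 <= 3) by apply exp_le_3.
  destruct (ln_facts kr Hkr) as [HL0 [HL1 HL2]].
  set (Lq := 5/2 * (ln kr / kr)) in *.
  set (p := exp (-(5/2) * (ln kr / kr))).
  assert (Hp : 0 < p <= 1).
  { split. apply exp_pos. unfold p. rewrite <- exp_0.
    destruct (Rle_lt_or_eq_dec (-(5/2) * (ln kr / kr)) 0 ltac:(unfold Lq in HL0; lra)) as [Hq|Hq].
    apply Rlt_le, exp_increasing; auto. rewrite Hq; lra. }
  assert (Hp1 : 1 - Lq <= p).
  { unfold p, Lq. pose proof (exp_ineq1_le (-(5/2) * (ln kr / kr))). lra. }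
  set (y0 := exp 1 * p / kr).
  assert (Hy0 : 0 < y0 <= exp 1 / kr).
  { unfold y0. split. apply Rdiv_lt_0_compat; [apply Rmult_lt_0_compat|]; lra.
    unfold Rdiv. apply Rmult_le_compat_r. apply Rlt_le, Rinv_0_lt_compat; lra. nra. }
  assert (Hek : exp 1 / kr <= 3 / 10000).
  { unfold Rdiv. apply Rmult_le_compat; try lra. apply Rlt_le, Rinv_0_lt_compat; lra.
    apply Rinv_le_contravar; lra. }
  set (x0 := y0 / (1 + y0)).
  assert (Hx0 : 0 <= x0 < 1).
  { unfold x0. split. apply Rlt_le, Rdiv_lt_0_compat; lra.
    apply Rmult_lt_reg_r with (1 + y0); [lra|]. replace (y0 / (1 + y0) * (1 + y0)) with y0 by (field; lra). lra. }
  assert (Exy : x0 / (1 - x0) = y0) by (unfold x0; field; lra).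
  pose proof (P1 k x0 t Hx0 ltac:(lra)) as HP1. rewrite HD1 in HP1.
  pose proof (Lambda_upper k x0 Hx0) as HU. rewrite Exy in HU.
  pose proof (sum_bound k Hkr Hk4 HL1) as HS. fold kr in HS. fold p in HS. fold y0 in HS.
  assert (Hx0y : x0 - x0^2/(1-x0) >= y0 - 2 * y0^2).
  { assert (E : x0 - x0^2/(1-x0) = (y0 - y0^2)/(1+y0)) by (unfold x0; field; lra).
    rewrite E. apply Rle_ge. apply Rmult_le_reg_r with (1+y0); [lra|].
    replace ((y0 - y0 ^ 2) / (1 + y0) * (1 + y0)) with (y0 - y0^2) by (field; lra).
    assert (0 <= y0^3) by (apply pow_le; lra). nra. }
  set (r0 := y0 - 2 * y0^2 - 6 * exp 1 / kr^2).
  assert (Hrho : r0 <= rho).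
  { unfold rho, r0. fold t. lra. }
  assert (Hq : r0 * kr / exp 1 >= 1 - Lq - 12 / kr).
  { replace (r0 * kr / exp 1) with (p - 2 * exp 1 * p^2 / kr - 6 / kr) by (unfold r0, y0; field; lra).
    assert (2 * exp 1 * p^2 / kr <= 6 / kr).
    { unfold Rdiv. apply Rmult_le_compat_r. apply Rlt_le, Rinv_0_lt_compat; lra.
      assert (p^2 <= 1) by nra. nra. }
    lra. }
  assert (Hsmall : 12 / kr <= 12 / 10000).
  { unfold Rdiv. apply Rmult_le_compat_l; [lra|]. apply Rinv_le_contravar; lra. }
  assert (Hr0 : 0 < r0).
  { assert (0 < r0 * kr / exp 1) by lra.
    replace r0 with ((r0 * kr / exp 1) * (exp 1 / kr)) by (field; lra).
    apply Rmult_lt_0_compat; auto. apply Rdiv_lt_0_compat; lra. }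
  assert (Hr0e : r0 <= exp 1 / kr).
  { unfold r0. assert (0 <= 6 * exp 1 / kr ^ 2).
    { unfold Rdiv. apply Rmult_le_pos; [lra| apply Rlt_le, Rinv_0_lt_compat, pow_lt; lra]. }
    assert (0 <= y0^2) by (apply pow2_ge_0). lra. }
  pose proof (P2 k t ltac:(lra)) as HP2. rewrite HD1 in HP2.
  assert (Htr : t <= 2 * rho) by (unfold rho; fold t; lra).
  pose proof (Lambda_lower k t ltac:(lra)) as HLl.
  assert (Hr4 : rho <= 1/4) by (unfold rho; fold t; assert (0 <= (t - 1/2)^2) by apply pow2_ge_0; nra).
  pose proof (L2_ge k (L1 k) t (L2 k) Hd Ht H2d) as HL2k.
  assert (HN : 0 < Rpower (INR n) (- (3 / 2))) by (unfold Rpower; apply exp_pos).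
  unfold gamma. fold t.
  apply (final_alg rho t (L2 k) r0 kr _ _ n Hn Hr0 Hrho Htr Ht Hr4 HL2k ltac:(lra) Hr0e).
  - lra.
  - apply num_final; auto.
  - exact HN.
Qed.
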